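(* Let $n\in\mathbb{N}$, $0<\beta\le n$, $b\in\operatorname{BMO}^\beta(\mathbb{R}^n)$ and $k>0$. Define $b_k(x)=k$ if $b(x)>k$, $b_k(x)=b(x)$ if $-k\le b(x)\le k$, and $b_k(x)=-k$ if $b(x)<-k$. Then there exists a constant $C_\beta>0$, depending only on $\beta$, such that $\|b_k\|_{\operatorname{BMO}^\beta(\mathbb{R}^n)}\le C_\beta\|b\|_{\operatorname{BMO}^\beta(\mathbb{R}^n)}$.
   Context: $\mathcal{H}^\beta_\infty(E)=\inf\{\sum_i\omega_\beta r_i^\beta:E\subset\bigcup_iB(x_i,r_i)\}$, $\omega_\beta=\pi^{\beta/2}/\Gamma(\beta/2+1)$; integrals against $\mathcal{H}^\beta_\infty$ are Choquet integrals $\int_\Omega h\,d\mathcal{H}^\beta_\infty=\int_0^\infty\mathcal{H}^\beta_\infty(\{x\in\Omega:h>t\})\,dt$. Cubes are axis-parallel with side length $\ell(Q)$. $\|f\|_{\operatorname{BMO}^\beta(\mathbb{R}^n)}=\sup_Q\inf_{c\in\mathbb{R}}\ell(Q)^{-\beta}\int_Q|f-c|\,d\mathcal{H}^\beta_\infty$, and $\operatorname{BMO}^\beta(\mathbb{R}^n)$ is the space of functions with finite such quantity. *)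

(* Defs.v *)
From HB Require Import structures.
From mathcomp Require Import all_boot all_order all_algebra.
From mathcomp Require Import all_classical all_reals all_analysis.
Set Implicit Arguments. Unset Strict Implicit. Unset Printing Implicit Defensive.
Import Order.TTheory GRing.Theory Num.Theory.
Import numFieldNormedType.Exports.
Local Open Scope classical_set_scope.
Local Open Scope ring_scope.

Section BMOdefs.
Variable R : realType.

Definition Gamma (s : R) : R :=
  fine (\int[@lebesgue_measure R]_(t in `]0%R, +oo[%classic)
          ((t `^ (s - 1)) * expR (- t))%:E)%E.

Definition omega (beta : R) : R := (pi `^ (beta / 2)) / Gamma (beta / 2 + 1).

Definition enorm (n : nat) (x : 'rV[R]_n) : R := Num.sqrt (\sum_(i < n) x 0 i ^+ 2).

Definition eball (n : nat) (x : 'rV[R]_n) (r : R) : set 'rV[R]_n :=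
  [set y | enorm (y - x) < r].

Definition hcontent (n : nat) (beta : R) (E : set 'rV[R]_n) : \bar R :=
  ereal_inf [set s : \bar R | exists (x : nat -> 'rV[R]_n) (r : nat -> R),
    [/\ (forall i, 0 <= r i), E `<=` \bigcup_i eball (x i) (r i) &
        s = (\sum_(0 <= i <oo) (omega beta * r i `^ beta)%:E)%E]].

Definition choquet (n : nat) (beta : R) (A : set 'rV[R]_n) (h : 'rV[R]_n -> R) : \bar R :=
  (\int[@lebesgue_measure R]_(t in `[0%R, +oo[%classic)
      hcontent beta [set x | A x /\ (t < h x)%R])%E.

Definition cube (n : nat) (a : 'rV[R]_n) (l : R) : set 'rV[R]_n :=
  [set x | forall i : 'I_n, a 0 i <= x 0 i <= a 0 i + l].

Definition bmo_norm (n : nat) (beta : R) (f : 'rV[R]_n -> R) : \bar R :=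
  ereal_sup [set s : \bar R | exists (a : 'rV[R]_n) (l : R), 0 < l /\
    s = ereal_inf [set v : \bar R | exists c : R,
          v = ((l `^ (- beta))%:E * choquet beta (cube a l) (fun x => `|f x - c|%R))%E]].

Definition trunc (n : nat) (k : R) (b : 'rV[R]_n -> R) : 'rV[R]_n -> R :=
  fun x => if k < b x then k else if b x < - k then - k else b x.

End BMOdefs.

(* Main.v *)
Require Import Defs.
From HB Require Import structures.
From mathcomp Require Import all_boot all_order all_algebra.
From mathcomp Require Import all_classical all_reals all_analysis.
From mathcomp Require Import lra.
Import Order.TTheory GRing.Theory Num.Theory.
Local Open Scope ring_scope.

Section Helpers.
Local Open Scope classical_set_scope.
Variable R : realType.

Lemma le_int_nomeas d (T : measurableType d) (mu : {measure set T -> \bar R})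
  (D : set T) (f g : T -> \bar R) :
  (forall x, D x -> (0 <= f x)%E) -> (forall x, D x -> (f x <= g x)%E) ->
  (\int[mu]_(x in D) f x <= \int[mu]_(x in D) g x)%E.
Proof.
move=> f0 fg.
have g0 : forall x, D x -> (0 <= g x)%E.
  by move=> x Dx; apply: le_trans (f0 x Dx) (fg x Dx).
rewrite !(integral_mkcond D) !ge0_integralTE; [|exact: erestrict_ge0|exact: erestrict_ge0].
apply: ge_ereal_sup => _ [h hf <-].
apply: ereal_sup_ubound; exists h => // x.
exact: le_trans (hf x) (lee_restrict fg x).
Qed.

Lemma omega_ge0 (beta : R) : 0 <= omega beta.
Proof.
rewrite /omega; apply: divr_ge0; first exact: powR_ge0.
rewrite /Gamma; apply: fine_ge0; apply: integral_ge0 => t _.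
by rewrite lee_fin; apply: mulr_ge0; [exact: powR_ge0|exact: expR_ge0].
Qed.

Lemma hcontent_ge0 n (beta : R) (E : set 'rV[R]_n) : (0 <= hcontent beta E)%E.
Proof.
apply: le_ereal_inf_tmp => _ [x [r [r0 _ ->]]].
apply: nneseries_ge0 => i _ _; rewrite lee_fin.
by apply: mulr_ge0; [exact: omega_ge0|exact: powR_ge0].
Qed.

Lemma hcontent_le n (beta : R) (E F : set 'rV[R]_n) : E `<=` F ->
  (hcontent beta E <= hcontent beta F)%E.
Proof.
move=> EF; apply: le_ereal_inf_tmp => _ [x [r [r0 Fc ->]]].
apply: ereal_inf_lbound; exists x, r; split => //.
exact: subset_trans EF Fc.
Qed.

Lemma choquet_le n (beta : R) (A : set 'rV[R]_n) (h1 h2 : 'rV[R]_n -> R) :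
  (forall x, A x -> h1 x <= h2 x) ->
  (choquet beta A h1 <= choquet beta A h2)%E.
Proof.
move=> h12; apply: le_int_nomeas => t _; first exact: hcontent_ge0.
apply: hcontent_le => x [Ax tx]; split => //.
exact: lt_le_trans tx (h12 x Ax).
Qed.

Definition T1 (k y : R) := if k < y then k else if y < - k then - k else y.

Lemma T1_lip (k y c : R) : 0 < k -> `|T1 k y - T1 k c| <= `|y - c|.
Proof.
move=> k0; rewrite /T1.
case: (ltrP k y) => h1; case: (ltrP y (-k)) => h2; case: (ltrP k c) => h3;
  case: (ltrP c (-k)) => h4;
  (case: (lerP 0 (y - c)) => H1; [rewrite (ger0_norm H1) | rewrite (ltr0_norm H1)]);
  rewrite ?ler_norml; try (apply/andP; split); lra.
Qed.

End Helpers.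

Theorem lemma2p11 (R : realType) (beta : R) (hbeta : 0 < beta) :
  exists C : R, 0 < C /\
    forall (n : nat) (b : 'rV[R]_n -> R) (k : R),
      beta <= n%:R ->
      (bmo_norm beta b < +oo)%E ->
      0 < k ->
      (bmo_norm beta (trunc k b) <= C%:E * bmo_norm beta b)%E.
Proof.
exists 1; split => // n b k _ _ k0.
rewrite mul1e; apply: ge_ereal_sup => _ [a [l [l0 ->]]].
apply: le_trans; last first.
  by apply: ereal_sup_ubound; exists a, l; split.
apply: le_ereal_inf_tmp => _ [c ->].
apply: le_trans (ereal_inf_lbound _) _; first by exists (@T1 R k c).
apply: lee_wpmul2l; first by rewrite lee_fin powR_ge0.
apply: choquet_le => x _.
exact: T1_lip.
Qed.
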